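(* Let $\beta\in(0,1)$, $z>0$, $c>0$, $\delta\in(0,1)$, and let $N$ and $\Delta$ be positive integers. Let $F$ be a continuous cumulative distribution function with support $[\underline{w},\overline{w}]$, $\underline{w}<\overline{w}$, and mean $\mu_w$, and assume $\underline{w}<(1-\beta)z+\beta\mu_w$ and $z+c<\overline{w}$. Put $\Upsilon(x)=\int_{\underline{w}}^{x}x\,dF(w)+\int_{x}^{\overline{w}}w\,dF(w)$. Let $w_R(0)$ be the unique solution in $[\underline{w},\overline{w}]$ of $x=z(1-\beta)+\beta\Upsilon(x)$ and $w_R(n)=(z+c)(1-\beta)+\beta\Upsilon(w_R(n-1))$ for $n\ge1$. Let $w_R^\delta(0)$ be the unique solution in $[\underline{w},\overline{w}]$ of $x=z(1-\beta)+\beta\delta\Upsilon(w_R(\Delta))+\beta(1-\delta)\Upsilon(x)$, and for $n=1,\dots,N$ let $w_R^{\delta}(n)=(z+c)(1-\beta)+\beta\delta\Upsilon(w_R(n-1+\Delta))+\beta(1-\delta)\Upsilon(w_R^\delta(n-1))$. Then $w_R(n+\Delta)>w_R^\delta(n)$ for all $n\in\{0,\dots,N\}$.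
   Context: Interpretation: $w_R(n)$ are reservation wages of a risk-neutral job searcher with $n$ remaining periods of unemployment benefits and no possibility of extension; $w_R^\delta(n)$ are reservation wages when benefits may (once) be extended by $\Delta$ periods with probability $\delta$ between offers. The lemma says that right after an extension the worker is more selective than just before it. *)

(* Defs.v *)
From HB Require Import structures.
From mathcomp Require Import all_boot all_order all_algebra.
From mathcomp Require Import all_classical all_reals all_analysis.
Set Implicit Arguments. Unset Strict Implicit. Unset Printing Implicit Defensive.
Import Order.TTheory GRing.Theory Num.Theory.
Import numFieldTopology.Exports.
Local Open Scope classical_set_scope.
Local Open Scope ring_scope.

Definition cdf_support (R : realType) (F : R -> R) (wl wu : R) : Prop :=
  [/\ (forall x, x <= wl -> F x = 0),
      (forall x, wu <= x -> F x = 1) &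
      (forall a b, wl <= a -> a < b -> b <= wu -> F a < F b)].

Definition mean_dF (R : realType) (F : cumulative R R) (wl wu : R) : R :=
  fine (\int[lebesgue_stieltjes_measure F]_(w in `[wl, wu]) (w%:E))%E.

Definition Upsilon (R : realType) (F : cumulative R R) (wl wu x : R) : R :=
  fine (\int[lebesgue_stieltjes_measure F]_(w in `[wl, x]) (x%:E)
        + \int[lebesgue_stieltjes_measure F]_(w in `[x, wu]) (w%:E))%E.

(* Main.v *)
Set Warnings "-all".
Require Import Defs.
From HB Require Import structures.
From mathcomp Require Import all_boot all_order all_algebra.
From mathcomp Require Import all_classical all_reals all_analysis.
Import Order.TTheory GRing.Theory Num.Theory.
Import numFieldTopology.Exports.
From mathcomp Require Import measurable_realfun.
From mathcomp Require Import ring lra.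
Local Open Scope ring_scope.
Section Main.
Local Open Scope classical_set_scope.
Section S.
Context {R : realType} (F : cumulative R R).
Local Notation mu := (lebesgue_stieltjes_measure F).
Local Notation T := R.
Lemma integral_null (D E : set T) (f : T -> \bar R) :
  measurable D -> measurable E -> D `<=` E -> measurable_fun E f ->
  mu (E `\` D) = 0%E -> (\int[mu]_(w in E) f w = \int[mu]_(w in D) f w)%E.
Proof.
move=> mD mE DE mf N0.
have mED : measurable (E `\` D) by exact: measurableD.
rewrite -{1}(setDUK DE) integral_setU //; last 2 first.
- by rewrite setDUK.
- by rewrite /disj_set setDIK.
rewrite [X in (_ + X)%E]null_set_integral ?adde0 //.
exact: measurable_funS mf.
Qed.

Lemma mg (x : R) (D : set T) : measurable D -> measurable_fun D (fun w : T => (Num.max x w)%:E).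
Proof.
move=> mD; apply/measurable_EFinP; apply: measurable_maxr => //.
Qed.

Lemma mu_oc (a b : R) : a <= b -> mu `]a, b] = (F b - F a)%:E.
Proof.
move=> ab.
rewrite /lebesgue_stieltjes_measure /measure_extension/=.
rewrite measurable_mu_extE/= ?wlength_itv_bnd//; exact: is_ocitv.
Qed.

Lemma mu_null_sub (S U : set T) :
  measurable S -> measurable U -> S `<=` U -> mu U = 0%E -> mu S = 0%E.
Proof.
move=> mS mT ST T0; apply/eqP; rewrite eq_le measure_ge0 andbT -T0.
by apply: le_measure => //; rewrite inE.
Qed.

Lemma mu_null_oc (S : set T) p q :
  measurable S -> p <= q -> S `<=` `]p, q] -> F p = F q -> mu S = 0%E.
Proof.
move=> mS pq Sp Fpq; apply: (@mu_null_sub S `]p, q]) => //.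
by rewrite mu_oc // Fpq subrr.
Qed.

Lemma mu_pt (x : R) : continuous F -> mu [set x] = 0%E.
Proof.
move=> cF; apply/eqP; rewrite eq_le measure_ge0 andbT.
apply/lee_addgt0Pr => e e0; rewrite add0e.
have := cF x; move/cvgrPdist_lt => /(_ e e0).
case/nbhs_ballP => d /= d0 H.
have hd : ball x d (x - d / 2).
  rewrite /ball /= opprB addrC subrK ger0_norm ?divr_ge0 ?ltW //.
  by rewrite ltr_pdivrMr // ltr_pMr // ltr1n.
have := H _ hd => /= Hlt.
have Hs : (mu [set x] <= mu `]x - d / 2, x]%classic%R)%E.
  apply: le_measure; rewrite ?inE //.
  move=> y /= ->; rewrite in_itv /= lexx andbT ltrBlDr ltrDl divr_gt0 //.
apply: (le_trans Hs).
rewrite mu_oc; last by rewrite lerBlDr lerDl divr_ge0 // ltW.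
rewrite lee_fin (le_trans _ (ltW Hlt)) //; exact: ler_norm.
Qed.

Ltac bsimp := repeat match goal with
 | H : is_true (_ && _) |- _ => case/andP: H => ? ?
 | H : _ /\ _ |- _ => case: H => ? ?
 | H : ~ is_true (_ && _) |- _ => move/negP: H; rewrite negb_and -?ltNge -?leNgt => /orP[] ?
 | H : ~ is_true (?a <= ?b) |- _ => move/negP: H; rewrite -ltNge => ?
 | H : ~ is_true (?a < ?b) |- _ => move/negP: H; rewrite -leNgt => ?
 end.
Ltac itv := let w := fresh "w" in move=> w /=; rewrite ?in_itv /=; move=> ?; bsimp;
  rewrite ?in_itv /=; try (apply/andP; split); lra.

Variables (wl wu : R).
Hypothesis cF : continuous F.
Hypothesis hs : cdf_support F wl wu.
Hypothesis wlu : wl < wu.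

Lemma F0 x : x <= wl -> F x = 0. Proof. by case: hs => h _ _; apply: h. Qed.
Lemma F1 x : wu <= x -> F x = 1. Proof. by case: hs => _ h _; apply: h. Qed.

Lemma nullL (S : set T) p : measurable S -> p <= wl -> S `<=` `]p, wl] -> mu S = 0%E.
Proof. by move=> mS pw Sp; apply: (@mu_null_oc S p wl mS pw Sp); rewrite !F0. Qed.
Lemma nullR (S : set T) q : measurable S -> wu <= q -> S `<=` `]wu, q] -> mu S = 0%E.
Proof. by move=> mS pw Sp; apply: (@mu_null_oc S wu q mS pw Sp); rewrite !F1. Qed.

Ltac inull := apply: integral_null => //; [itv | exact: mg | idtac].
Ltac nR B := apply: (@nullR _ B) => //; [exact: measurableD | lra | itv].
Ltac nL A := apply: (@nullL _ (A - 1)) => //; [exact: measurableD | lra | itv].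

Lemma Ups_rep (x A B : R) : A < wl -> A < x -> wu < B -> x < B ->
 (\int[mu]_(w in `[wl, x]) (x%:E) + \int[mu]_(w in `[x, wu]) (w%:E)
   = \int[mu]_(w in `[A, B]) (Num.max x w)%:E)%E.
Proof.
move=> Al Ax uB xB.
have [xl|lx] := ltP x wl.
  rewrite (@set_itv_ge _ _ (BLeft wl) (BRight x)); last by rewrite bnd_simp -ltNge.
  rewrite integral_set0 add0e.
  have -> : (\int[mu]_(w in `[A, B]) (Num.max x w)%:E = \int[mu]_(w in `[A, wu]) (Num.max x w)%:E)%E.
    by inull; nR B.
  have -> : (\int[mu]_(w in `[A, wu]) (Num.max x w)%:E = \int[mu]_(w in `[x, wu]) (Num.max x w)%:E)%E.
    by inull; nL A.
  apply: eq_integral => w; rewrite inE /= in_itv /= => /andP[h _].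
  by rewrite max_r.
have [xu|ux] := leP x wu.
  have -> : (\int[mu]_(w in `[A, B]) (Num.max x w)%:E = \int[mu]_(w in `[A, wu]) (Num.max x w)%:E)%E.
    by inull; nR B.
  have -> : (\int[mu]_(w in `[A, wu]) (Num.max x w)%:E = \int[mu]_(w in `[wl, wu]) (Num.max x w)%:E)%E.
    by inull; nL A.
  have -> : `[wl, wu]%classic = `[wl, x[%classic `|` `[x, wu]%classic.
    apply/seteqP; split.
      move=> w /=; rewrite !in_itv /= => /andP[h1 h2].
      by case: (ltP w x) => h; [left | right]; rewrite ?h1 ?h2.
    by move=> w [] /=; rewrite !in_itv /= => /andP[h1 h2]; apply/andP; split; lra.
  rewrite integral_setU //; last 2 first.
  - by apply/measurable_EFinP; apply: measurable_maxr.
  - rewrite /disj_set; apply/eqP/seteqP; split => // w /= [].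
    by rewrite !in_itv /= => /andP[_ h1] /andP[h2 _]; lra.
  congr (_ + _)%E.
    have -> : (\int[mu]_(w in `[wl, x[) (Num.max x w)%:E = \int[mu]_(w in `[wl, x]) (Num.max x w)%:E)%E.
      apply/esym; inull.
      apply: (@mu_null_sub _ [set x]) => //; first exact: measurableD.
        by itv.
      exact: mu_pt.
    apply: eq_integral => w; rewrite inE /= in_itv /= => /andP[_ h].
    by rewrite max_l.
  apply: eq_integral => w; rewrite inE /= in_itv /= => /andP[h _].
  by rewrite max_r.
rewrite (@set_itv_ge _ _ (BLeft x) (BRight wu)); last by rewrite bnd_simp -ltNge.
rewrite integral_set0 adde0.
have -> : (\int[mu]_(w in `[A, B]) (Num.max x w)%:E = \int[mu]_(w in `[A, x]) (Num.max x w)%:E)%E.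
  by inull; nR B.
have -> : (\int[mu]_(w in `[A, x]) (Num.max x w)%:E = \int[mu]_(w in `[wl, x]) (Num.max x w)%:E)%E.
  by inull; nL A.
apply: eq_integral => w; rewrite inE /= in_itv /= => /andP[_ h].
by rewrite max_l.
Qed.


Lemma mu_AB_le1 (A B : R) : A < wl -> wu < B -> (mu `[A, B] <= 1)%E.
Proof.
move=> Al uB; have wlu2 := wlu.
have Hs : (mu `[A, B] <= mu `]A - 1, B]%classic%R)%E.
  apply: le_measure; rewrite ?inE //; itv.
rewrite (le_trans Hs) // mu_oc; last lra.
by rewrite F1 ?F0; [rewrite subr0 | lra | lra].
Qed.

Lemma mu_AB_fin (A B : R) : A < wl -> wu < B -> (mu `[A, B] < +oo)%E.
Proof. by move=> Al uB; rewrite (le_lt_trans (@mu_AB_le1 A B Al uB)) // ltry. Qed.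

Lemma Ups_int (x A B : R) : A < wl -> A < x -> wu < B -> x < B ->
  mu.-integrable `[A, B] (EFin \o (fun w => Num.max x w)).
Proof.
move=> Al Ax uB xB.
apply: measurable_bounded_integrable => //.
- exact: mu_AB_fin.
- exact: measurable_maxr.
have hb : forall y : R, A <= y <= B -> `|Num.max x y| <= `|x| + `|A| + `|B|.
  move=> w /andP[h1 h2].
  have := lexx `|x|; rewrite ler_norml => /andP[x1 x2].
  have := lexx `|A|; rewrite ler_norml => /andP[a1 a2].
  have := lexx `|B|; rewrite ler_norml => /andP[b1 b2].
  rewrite ler_norml; apply/andP; split.
    by case: (leP x w) => h; lra.
  by case: (leP x w) => h; lra.
exists (`|x| + `|A| + `|B|); split; first exact: num_real.
move=> M hM w; rewrite /= in_itv /= => Hw.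
exact: le_trans (hb w Hw) (ltW hM).
Qed.

Lemma Ups_E (x A B : R) : A < wl -> A < x -> wu < B -> x < B ->
  (Upsilon F wl wu x)%:E = (\int[mu]_(w in `[A, B]) (Num.max x w)%:E)%E.
Proof.
move=> Al Ax uB xB.
rewrite /Upsilon (@Ups_rep x A B) // fineK //.
exact: (integrable_fin_num _ (@Ups_int x A B Al Ax uB xB)).
Qed.

Lemma Ups_diff (a b : R) : a <= b ->
  let A := Num.min a wl - 1 in let B := Num.max b wu + 1 in
  ((Upsilon F wl wu b - Upsilon F wl wu a)%:E =
    \int[mu]_(w in `[A, B]) (Num.max b w - Num.max a w)%:E)%E.
Proof.
move=> ab A B.
have hA1 : A < wl by rewrite /A; case: (leP a wl) => h; lra.
have hA2 : A < a by rewrite /A; case: (leP a wl) => h; lra.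
have hB1 : wu < B by rewrite /B; case: (leP b wu) => h; lra.
have hB2 : b < B by rewrite /B; case: (leP b wu) => h; lra.
have wlu2 := wlu.
have e1 := @Ups_E b A B hA1 (lt_le_trans hA2 ab) hB1 hB2.
have e2 := @Ups_E a A B hA1 hA2 hB1 (le_lt_trans ab hB2).
have i1 := @Ups_int b A B hA1 (lt_le_trans hA2 ab) hB1 hB2.
have i2 := @Ups_int a A B hA1 hA2 hB1 (le_lt_trans ab hB2).
have -> : (Upsilon F wl wu b - Upsilon F wl wu a)%:E = ((Upsilon F wl wu b)%:E - (Upsilon F wl wu a)%:E)%E by [].
rewrite e1 e2 -(integralB_EFin _ i1 i2) //.
Qed.


Lemma mdiff (a b : R) (D : set R) : measurable D ->
  measurable_fun D (fun w : R => (Num.max b w - Num.max a w)%:E).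
Proof.
move=> mD; apply/measurable_EFinP; apply: measurable_funB; exact: measurable_maxr.
Qed.

Lemma Ups_lip (a b : R) : a <= b ->
  0 <= Upsilon F wl wu b - Upsilon F wl wu a <= b - a.
Proof.
move=> ab; have := @Ups_diff a b ab => /=.
set A := Num.min a wl - 1; set B := Num.max b wu + 1 => E.
have hA1 : A < wl by rewrite /A; case: (leP a wl) => h; lra.
have hB1 : wu < B by rewrite /B; case: (leP b wu) => h; lra.
have d0 : forall w, 0 <= Num.max b w - Num.max a w.
  by move=> w; case: (leP a w); case: (leP b w) => h1 h2; lra.
have d1 : forall w, Num.max b w - Num.max a w <= b - a.
  by move=> w; case: (leP a w); case: (leP b w) => h1 h2; lra.
apply/andP; split.
  by rewrite -lee_fin E; apply: integral_ge0 => w _; rewrite lee_fin.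
rewrite -lee_fin E.
have H := @ge0_le_integral _ _ _ mu `[A, B] (measurable_itv _)
  (fun w => (Num.max b w - Num.max a w)%:E) (cst (b - a)%:E).
apply: le_trans (H _ _ _ _) _.
- by move=> w _; rewrite lee_fin.
- exact: mdiff.
- exact: measurable_cst.
- by move=> w _; rewrite lee_fin.
rewrite integral_cst //.
have ba : (0 <= b - a) by lra.
rewrite -[X in (_ <= X)%E]mule1.
apply: lee_wpmul2l; first by rewrite lee_fin.
exact: mu_AB_le1.
Qed.

Lemma Fpos (m : R) : wl < m -> 0 < F m.
Proof.
move=> lm; case: (leP m wu) => h.
  have := hs; case => h0 _ h3.
  by rewrite -(h0 wl (lexx _)); apply: h3.
by rewrite F1 ?ltW.
Qed.

Lemma Ups_strict (a b : R) : a < b -> wl < b ->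
  Upsilon F wl wu a < Upsilon F wl wu b.
Proof.
move=> ab lb; have := @Ups_diff a b (ltW ab) => /=.
set A := Num.min a wl - 1; set B := Num.max b wu + 1 => E.
have hA1 : A < wl by rewrite /A; case: (leP a wl) => h; lra.
have hA2 : A < a by rewrite /A; case: (leP a wl) => h; lra.
have hB1 : wu < B by rewrite /B; case: (leP b wu) => h; lra.
have hB2 : b < B by rewrite /B; case: (leP b wu) => h; lra.
set a' := Num.max a wl.
have ha1 : a <= a' by rewrite /a'; case: (leP a wl) => h; lra.
have ha2 : wl <= a' by rewrite /a'; case: (leP a wl) => h; lra.
have ha3 : a' < b by rewrite /a'; case: (leP a wl) => h; lra.
set m := (a' + b) / 2.
set c := (b - a') / 2.
have c0 : 0 < c by rewrite /c; lra.
have hm1 : a' < m by rewrite /m; lra.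
have hm2 : m < b by rewrite /m; lra.
have hmc : b - m = c by rewrite /m /c; lra.
have d0 : forall w, 0 <= Num.max b w - Num.max a w.
  by move=> w; case: (leP a w); case: (leP b w) => h1 h2; lra.
have dc : forall w, w <= m -> c <= Num.max b w - Num.max a w.
  move=> w wm; case: (leP a w); case: (leP b w) => h1 h2; lra.
rewrite -subr_gt0 -lte_fin E.
have Fm := @Fpos m (le_lt_trans ha2 hm1).
apply: (@lt_le_trans _ _ (c%:E * mu `]A, m]%classic)%E).
  rewrite mu_oc; last lra.
  by rewrite (@F0 A) ?subr0; [rewrite -EFinM lte_fin mulr_gt0 | lra].
have -> : (c%:E * mu `]A, m]%classic = \int[mu]_(w in `]A, m]) (cst c%:E) w)%E by rewrite integral_cst.
apply: (@le_trans _ _ (\int[mu]_(w in `]A, m]) (Num.max b w - Num.max a w)%:E)%E).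
  apply: ge0_le_integral => //.
  - by move=> *; rewrite lee_fin ltW.
  - exact: mdiff.
  - by move=> w; rewrite /= in_itv /= => /andP[_ h]; rewrite lee_fin dc.
apply: ge0_subset_integral => //.
- exact: mdiff.
- by move=> w _; rewrite lee_fin.
- by itv.
Qed.

End S.
End Main.

Lemma main_abs (R : realType) (U : R -> R) (wl beta z c delta : R) (N Delta : nat)
  (wR wRd : nat -> R) :
  (forall a b, a <= b -> 0 <= U b - U a <= b - a) ->
  (forall a b, a < b -> wl < b -> U a < U b) ->
  0 < beta < 1 -> 0 < c -> 0 < delta < 1 -> (0 < Delta)%N ->
  wl <= wR 0%N ->
  wR 0%N = z * (1 - beta) + beta * U (wR 0%N) ->
  (forall n : nat, wR n.+1 = (z + c) * (1 - beta) + beta * U (wR n)) ->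
  wRd 0%N = z * (1 - beta) + beta * delta * U (wR Delta)
            + beta * (1 - delta) * U (wRd 0%N) ->
  (forall n : nat, (n < N)%N ->
     wRd n.+1 = (z + c) * (1 - beta)
                + beta * delta * U (wR (n + Delta)%N)
                + beta * (1 - delta) * U (wRd n)) ->
  forall n : nat, (n <= N)%N -> wRd n < wR (n + Delta)%N.
Proof.
move=> Ulip Ustr /andP[b0 b1] c0 /andP[d0 d1] D0 hl h0 hS hd0 hdS.
case: Delta D0 hd0 hdS => // d _ hd0 hdS.
set k := c * (1 - beta).
have k0 : 0 < k by rewrite /k mulr_gt0 // subr_gt0.
have e0 : wR 1%N - wR 0%N = k.
  rewrite hS [X in _ - X]h0 /k; ring.
have e1 n : wR n.+2 - wR n.+1 = beta * (U (wR n.+1) - U (wR n)).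
  rewrite [wR n.+2]hS [wR n.+1 in X in _ - X]hS; ring.
have P n : 0 <= wR n.+1 - wR n <= k.
  elim: n => [|n [/andP[IH1 IH2]]]; first by rewrite e0 lexx ltW.
  have := Ulip (wR n) (wR n.+1); rewrite -subr_ge0 => /(_ IH1) /andP[u1 u2].
  rewrite e1; apply/andP; split; first exact: mulr_ge0 (ltW b0) u1.
  nra.
have M n : wR 0%N + k <= wR n.+1.
  elim: n => [|n IH]; first by lra.
  by have := P n.+1 => /andP[p1 _]; lra.
have wlt n : wl < wR (n + d.+1)%N.
  rewrite addnS; have := M (n + d)%N; lra.
elim => [_|n IH hn].
  rewrite add0n.
  rewrite ltNge; apply/negP => h.
  have := Ulip _ _ h => /andP[eA eB].
  have := P d => /andP[pA pB].
  have := Ulip (wR d) (wR d.+1); rewrite -subr_ge0 => /(_ pA) /andP[qA qB].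
  have Eq : wRd 0%N - wR d.+1 = - k + beta * (U (wR d.+1) - U (wR d))
       + beta * (1 - delta) * (U (wRd 0%N) - U (wR d.+1)).
    rewrite [X in X - _]hd0 [wR d.+1 in X in _ - X]hS /k; ring.
  have p1 : beta * (U (wR d.+1) - U (wR d)) <= beta * k.
    apply: ler_wpM2l; [exact: ltW | lra].
  have bd0 : 0 <= beta * (1 - delta) by rewrite mulr_ge0 // ?subr_ge0 ltW.
  have p2 : beta * (1 - delta) * (U (wRd 0%N) - U (wR d.+1)) <= beta * (1 - delta) * (wRd 0%N - wR d.+1).
    exact: ler_wpM2l.
  have p3 : beta * (1 - delta) < 1 by nra.
  have p4 : 0 < k * (1 - beta) by rewrite mulr_gt0 // subr_gt0.
  nra.
have hnN : (n < N)%N by exact: hn.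
rewrite hdS // addSn hS.
have := IH (ltnW hn) => lt1.
have := Ustr _ _ lt1 (wlt n) => lt2.
have bd0 : 0 < beta * (1 - delta) by rewrite mulr_gt0 // subr_gt0.
rewrite -subr_gt0.
have -> : (z + c) * (1 - beta) + beta * U (wR (n + d.+1)%N) -
  ((z + c) * (1 - beta) + beta * delta * U (wR (n + d.+1)%N) + beta * (1 - delta) * U (wRd n))
  = beta * (1 - delta) * (U (wR (n + d.+1)%N) - U (wRd n)) by ring.
by rewrite mulr_gt0 // subr_gt0.
Qed.

Theorem lemma5 (R : realType) (beta z c delta : R) (N Delta : nat)
  (F : cumulative R R) (wl wu : R) (wR wRd : nat -> R) :
  0 < beta < 1 -> 0 < z -> 0 < c -> 0 < delta < 1 ->
  (0 < N)%N -> (0 < Delta)%N ->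
  wl < wu ->
  continuous F ->
  cdf_support F wl wu ->
  wl < (1 - beta) * z + beta * mean_dF F wl wu ->
  z + c < wu ->
  (* w_R(0): the solution in [wl, wu] of x = z(1-beta) + beta Upsilon(x) *)
  wl <= wR 0%N <= wu ->
  wR 0%N = z * (1 - beta) + beta * Upsilon F wl wu (wR 0%N) ->
  (forall n : nat,
     wR n.+1 = (z + c) * (1 - beta) + beta * Upsilon F wl wu (wR n)) ->
  (* w_R^delta(0) *)
  wl <= wRd 0%N <= wu ->
  wRd 0%N = z * (1 - beta) + beta * delta * Upsilon F wl wu (wR Delta)
            + beta * (1 - delta) * Upsilon F wl wu (wRd 0%N) ->
  (forall n : nat, (n < N)%N ->
     wRd n.+1 = (z + c) * (1 - beta)
                + beta * delta * Upsilon F wl wu (wR (n + Delta)%N)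
                + beta * (1 - delta) * Upsilon F wl wu (wRd n)) ->
  forall n : nat, (n <= N)%N -> wRd n < wR (n + Delta)%N.
Proof.
move=> hb hz hc hd hN hD hwlu cF hs hmean hzc /andP[hw0 _] e0 eS _ ed0 edS.
apply: (@main_abs R (Upsilon F wl wu) wl beta z c delta N Delta wR wRd) => //.
- exact: (@Ups_lip R F wl wu cF hs hwlu).
- exact: (@Ups_strict R F wl wu cF hs hwlu).
Qed.
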